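(* Let $M\models\mathrm{AA}$, let $D\subseteq M$ be formula-definable and let $I\subseteq M$ be a proper cut with $I<M\setminus I$. Assume that for every $a\in I$ there is $u\in I\cap D$ with $a\le u$. Then for every $\epsilon>0$ and every $b\in M\setminus I$ there is $v\in (M\setminus I)\cap D^\epsilon$ with $v\le b$.
   Context: Structures are complete metric spaces of diameter at most $1$ in the language $L=\{+,\cdot,\wedge,\vee,0,1\}$ (operations $1$-Lipschitz, $d$ the only relation symbol). Affine formulas are built from $1$ and atomic formulas $d(t_1,t_2)$ using $+$, scalar multiplication by reals, $\sup_x$, $\inf_x$. $\mathrm{AA}$ is the set of all closed affine conditions true in every model of first-order Peano arithmetic (formulated in $L$ with lattice operations min/max and discrete metric). $x\le y$ means $x\wedge y=x$, $x<y$ means $x\le y$, $x\neq y$. A cut is a nonempty $I\subseteq M$ with $x\le y\in I\Rightarrow x\in I$ and $x\in I\Rightarrow x+1\in I$; proper means $I\ne M$; $I<M\setminus I$ means $x<y$ for all $x\in I$, $y\notin I$. A set $D$ is formula-definable if it is closed and $d(x,D)=\phi^M(x)$ for all $x$ for some affine formula $\phi$ with parameters from $M$. $D^\epsilon=\{x\in M: d(x,D)<\epsilon\}$. *)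

(* Defs.v *)
From HB Require Import structures.
From mathcomp Require Import all_boot all_order all_algebra.
From mathcomp Require Import boolp classical_sets reals.
Set Implicit Arguments. Unset Strict Implicit. Unset Printing Implicit Defensive.
Import Order.TTheory GRing.Theory Num.Theory.
Local Open Scope classical_set_scope.
Local Open Scope ring_scope.

Record LStr (R : realType) := {
  car :> Type;
  dist : car -> car -> R;
  sadd : car -> car -> car;
  smul : car -> car -> car;
  smeet : car -> car -> car;
  sjoin : car -> car -> car;
  szero : car;
  sone : car;
  dist_ge0 : forall x y, 0 <= dist x y;
  dist_le1 : forall x y, dist x y <= 1;
  dist_refl : forall x, dist x x = 0;
  dist_sep : forall x y, dist x y = 0 -> x = y;
  dist_sym : forall x y, dist x y = dist y x;
  dist_tri : forall x y z, dist x z <= dist x y + dist y z;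
  dist_complete : forall u : nat -> car,
    (forall eps : R, 0 < eps -> exists N, forall m n, (N <= m)%N -> (N <= n)%N ->
        dist (u m) (u n) < eps) ->
    exists l, forall eps : R, 0 < eps -> exists N, forall n, (N <= n)%N ->
        dist (u n) l < eps;
  sadd_lip : forall x y x' y', dist (sadd x y) (sadd x' y') <= dist x x' + dist y y';
  smul_lip : forall x y x' y', dist (smul x y) (smul x' y') <= dist x x' + dist y y';
  smeet_lip : forall x y x' y', dist (smeet x y) (smeet x' y') <= dist x x' + dist y y';
  sjoin_lip : forall x y x' y', dist (sjoin x y) (sjoin x' y') <= dist x x' + dist y y'
}.

Definition upd (T : Type) (e : nat -> T) (n : nat) (m : T) : nat -> T :=
  fun k => if k == n then m else e k.

Inductive term :=
  | TVar of nat | TZero | TOne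
  | TAdd of term & term | TMul of term & term
  | TMeet of term & term | TJoin of term & term.

Inductive aform (R : Type) :=
  | AOne
  | ADist of term & term
  | AAdd of aform R & aform R
  | AScale of R & aform R
  | ASup of nat & aform R
  | AInf of nat & aform R.
Arguments AOne {R}.
Arguments ADist {R}.

Fixpoint teval (R : realType) (M : LStr R) (e : nat -> M) (t : term) : M :=
  match t with
  | TVar n => e n
  | TZero => szero M
  | TOne => sone M
  | TAdd a b => sadd (teval e a) (teval e b)
  | TMul a b => smul (teval e a) (teval e b)
  | TMeet a b => smeet (teval e a) (teval e b)
  | TJoin a b => sjoin (teval e a) (teval e b)
  end.

Fixpoint aeval (R : realType) (M : LStr R) (e : nat -> M) (f : aform R) : R :=
  match f with
  | AOne => 1
  | ADist a b => dist (teval e a) (teval e b)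
  | AAdd f g => aeval e f + aeval e g
  | AScale r f => r * aeval e f
  | ASup n f => sup [set aeval (upd e n m) f | m in [set: car M]]
  | AInf n f => inf [set aeval (upd e n m) f | m in [set: car M]]
  end.

Fixpoint tfree (n : nat) (t : term) : bool :=
  match t with
  | TVar k => k == n
  | TZero | TOne => false
  | TAdd a b | TMul a b | TMeet a b | TJoin a b => tfree n a || tfree n b
  end.

Fixpoint afree (R : Type) (n : nat) (f : aform R) : bool :=
  match f with
  | AOne => false
  | ADist a b => tfree n a || tfree n b
  | AAdd f g => afree n f || afree n g
  | AScale _ f => afree n f
  | ASup k f | AInf k f => (n != k) && afree n f
  end.

Definition closed_aform (R : Type) (f : aform R) := forall n, ~~ afree n f.

Inductive pterm :=
  | PVar of nat | PZero | POne | PAdd of pterm & pterm | PMul of pterm & pterm.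

Inductive pform :=
  | PEq of pterm & pterm
  | PBot
  | PImp of pform & pform
  | PAll of nat & pform.

Fixpoint pteval (R : realType) (M : LStr R) (e : nat -> M) (t : pterm) : M :=
  match t with
  | PVar n => e n
  | PZero => szero M
  | POne => sone M
  | PAdd a b => sadd (pteval e a) (pteval e b)
  | PMul a b => smul (pteval e a) (pteval e b)
  end.

Fixpoint psat (R : realType) (M : LStr R) (e : nat -> M) (f : pform) : Prop :=
  match f with
  | PEq a b => pteval e a = pteval e b
  | PBot => False
  | PImp f g => psat e f -> psat e g
  | PAll n f => forall m : M, psat (upd e n m) f
  end.

(* An L-structure which is a model of first-order PA (reduct to +,*,0,1),
   with discrete metric and meet/join = min/max for the PA order. *)
Definition PA_axioms (R : realType) (N : LStr R) : Prop :=
  (forall x : N, sadd x (sone N) <> szero N) /\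
  (forall x y : N, sadd x (sone N) = sadd y (sone N) -> x = y) /\
  (forall x : N, sadd x (szero N) = x) /\
  (forall x y : N, sadd x (sadd y (sone N)) = sadd (sadd x y) (sone N)) /\
  (forall x : N, smul x (szero N) = szero N) /\
  (forall x y : N, smul x (sadd y (sone N)) = sadd (smul x y) x) /\
  (forall (f : pform) (n : nat) (e : nat -> N),
      psat (upd e n (szero N)) f ->
      (forall m : N, psat (upd e n m) f -> psat (upd e n (sadd m (sone N))) f) ->
      forall m : N, psat (upd e n m) f).

Definition PA_model (R : realType) (N : LStr R) : Prop :=
  [/\ PA_axioms N,
      (forall x y : N, x <> y -> dist x y = 1),
      (forall x y : N, (exists z, sadd x z = y) -> smeet x y = x /\ sjoin x y = y) &
      (forall x y : N, ~ (exists z, sadd x z = y) -> smeet x y = y /\ sjoin x y = x)].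

(* M |= AA : M satisfies every closed affine condition (phi >= 0, phi a
   closed affine formula) that holds in every model of PA. *)
Definition models_AA (R : realType) (M : LStr R) : Prop :=
  forall f : aform R, closed_aform f ->
    (forall N : LStr R, PA_model N -> 0 <= aeval (fun _ => szero N) f) ->
    0 <= aeval (fun _ => szero M) f.

Definition sle (R : realType) (M : LStr R) (x y : M) := smeet x y = x.
Definition slt (R : realType) (M : LStr R) (x y : M) := sle x y /\ x <> y.

Definition is_cut (R : realType) (M : LStr R) (I : set M) :=
  [/\ exists x, I x,
      (forall x y, sle x y -> I y -> I x) &
      (forall x, I x -> I (sadd x (sone M)))].

Definition proper_cut (R : realType) (M : LStr R) (I : set M) :=
  is_cut I /\ I <> [set: car M].

Definition dist_set (R : realType) (M : LStr R) (x : M) (D : set M) : R :=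
  inf [set dist x y | y in D].

Definition closed_set (R : realType) (M : LStr R) (D : set M) :=
  forall x, (forall eps : R, 0 < eps -> exists2 y, D y & dist x y < eps) -> D x.

(* D is closed and d(x,D) = phi^M(x, params) for some affine formula phi,
   with x as variable 0 and parameters given by an assignment e. *)
Definition formula_definable (R : realType) (M : LStr R) (D : set M) :=
  closed_set D /\
  exists (f : aform R) (e : nat -> M), forall x, aeval (upd e 0 x) f = dist_set x D.

Definition eps_nbhd (R : realType) (M : LStr R) (D : set M) (eps : R) : set M :=
  [set x | dist_set x D < eps].

(* Main.v *)
Require Import Defs.
From HB Require Import structures.
From mathcomp Require Import all_boot all_order all_algebra.
From mathcomp Require Import boolp classical_sets reals.
From Stdlib Require Import Lia.
From mathcomp Require Import lra.
Set Implicit Arguments. Unset Strict Implicit. Unset Printing Implicit Defensive.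
Import Order.TTheory GRing.Theory Num.Theory.
Local Open Scope classical_set_scope.
Local Open Scope ring_scope.

Section RealLemmas.
Variable R : realType.
Implicit Types S : set R.

Lemma inf_le_mem S x : has_lbound S -> S x -> inf S <= x.
Proof. by move=> hS Sx; apply: ge_inf. Qed.

Lemma le_sup_mem S x : has_ubound S -> S x -> x <= sup S.
Proof. by move=> hS Sx; apply: ub_le_sup. Qed.

Lemma inf_eq_min S x : S x -> (forall y, S y -> x <= y) -> inf S = x.
Proof.
move=> Sx hx; apply/le_anti/andP; split.
  by apply: inf_le_mem => //; exists x.
by apply: lb_le_inf; [exists x|].
Qed.

Lemma sup_eq_max S x : S x -> (forall y, S y -> y <= x) -> sup S = x.
Proof.
move=> Sx hx; apply/le_anti/andP; split.
  by apply: ge_sup; [exists x|].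
by apply: le_sup_mem => //; exists x.
Qed.

Lemma finite_min S (V : seq R) : S !=set0 -> (forall y, S y -> y \in V) ->
  exists x, S x /\ forall y, S y -> x <= y.
Proof.
elim: V S => [|a V IH] S [y Sy] hV; first by move: (hV _ Sy).
have [[z Sz]|hne] := pselect ((S `\ a) !=set0).
  have hV' : forall w, (S `\ a) w -> w \in V.
    move=> w [Sw wa]; move: (hV w Sw); rewrite inE => /orP[/eqP//|//].
  have [m [[Sm ma] hm]] := IH (S `\ a) (ex_intro _ z Sz) hV'.
  case: (pselect (S a)) => Sa.
    case: (lerP a m) => am.
      exists a; split => // w Sw; case: (pselect (w = a)) => [->//|wa].
      exact: le_trans am (hm w (conj Sw wa)).
    exists m; split => // w Sw; case: (pselect (w = a)) => [->|wa]; first exact: ltW.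
    exact: hm.
  exists m; split => // w Sw; case: (pselect (w = a)) => [wa|wa]; first by move: Sa; rewrite -wa.
  exact: hm.
exists a; split.
  case: (pselect (S a)) => [//|Sa]; exfalso; apply: hne; exists y; split => // ya.
  by apply: Sa; move: Sy; rewrite (_ : y = a).
move=> w Sw; case: (pselect (w = a)) => [->//|wa]; exfalso; apply: hne.
by exists w.
Qed.

Lemma finite_max S (V : seq R) : S !=set0 -> (forall y, S y -> y \in V) ->
  exists x, S x /\ forall y, S y -> y <= x.
Proof.
move=> [y Sy] hV.
have hV' : forall w, (-%R @` S) w -> w \in map -%R V.
  by move=> w [z Sz <-]; apply: map_f; apply: hV.
have hne : (-%R @` S) !=set0 by exists (- y); exists y.
have [x [[z Sz zx] hx]] := finite_min hne hV'.
exists z; split => // w Sw; rewrite -lerN2 zx; apply: hx; by exists w.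
Qed.

Lemma finite_inf_mem S (V : seq R) : S !=set0 -> (forall y, S y -> y \in V) ->
  S (inf S).
Proof.
move=> hS hV; have [x [Sx hx]] := finite_min hS hV.
by rewrite (inf_eq_min Sx hx).
Qed.

Lemma finite_sup_mem S (V : seq R) : S !=set0 -> (forall y, S y -> y \in V) ->
  S (sup S).
Proof.
move=> hS hV; have [x [Sx hx]] := finite_max hS hV.
by rewrite (sup_eq_max Sx hx).
Qed.

End RealLemmas.


Fixpoint tmax (t : term) : nat :=
  match t with
  | TVar n => n
  | TZero | TOne => 0
  | TAdd a b | TMul a b | TMeet a b | TJoin a b => maxn (tmax a) (tmax b)
  end.

Fixpoint amax (R : Type) (f : aform R) : nat :=
  match f with
  | AOne => 0
  | ADist a b => maxn (tmax a) (tmax b)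
  | AAdd f g => maxn (amax f) (amax g)
  | AScale _ f => amax f
  | ASup n f | AInf n f => maxn n (amax f)
  end.

Fixpoint abnd (R : realType) (f : aform R) : R :=
  match f with
  | AOne => 1
  | ADist _ _ => 1
  | AAdd f g => abnd f + abnd g
  | AScale r f => `|r| * abnd f
  | ASup _ f | AInf _ f => abnd f
  end.

Section Generic.
Variable R : realType.
Variable M : LStr R.
Implicit Types (e : nat -> M).

Lemma upd_same e n m : upd e n m n = m.
Proof. by rewrite /upd eqxx. Qed.
Lemma upd_other e n m k : k <> n -> upd e n m k = e k.
Proof. by rewrite /upd => /eqP/negbTE ->. Qed.

Lemma teval_agree e e' t : (forall k, (k <= tmax t)%N -> e k = e' k) ->
  teval e t = teval e' t.
Proof.
elim: t => [n|||a IHa b IHb|a IHa b IHb|a IHa b IHb|a IHa b IHb] //= h;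
  try (by apply: h);
  by rewrite IHa ?IHb // => k hk; apply: h; rewrite leq_max hk ?orbT.
Qed.

Lemma aeval_agree e e' f : (forall k, (k <= amax f)%N -> e k = e' k) ->
  aeval e f = aeval e' f.
Proof.
elim: f e e' => [|a b|f IHf g IHg|r f IHf|n f IHf|n f IHf] e e' //= h.
- by rewrite (@teval_agree e e' a) ?(@teval_agree e e' b) // => k hk; apply: h;
    rewrite leq_max hk ?orbT.
- by rewrite (IHf e e') ?(IHg e e') // => k hk; apply: h; rewrite leq_max hk ?orbT.
- by rewrite (IHf e e').
- congr sup; congr image; apply: funext => m; apply: IHf => k hk.
  rewrite /upd; case: eqP => // _; apply: h; by rewrite leq_max hk orbT.
- congr inf; congr image; apply: funext => m; apply: IHf => k hk.
  rewrite /upd; case: eqP => // _; apply: h; by rewrite leq_max hk orbT.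
Qed.

Lemma abnd_ge0 (f : aform R) : 0 <= abnd f.
Proof.
elim: f => //= [f IHf g IHg|r f IHf]; [exact: addr_ge0|exact: mulr_ge0].
Qed.

Lemma aeval_bnd e f : `|aeval e f| <= abnd f.
Proof.
elim: f e => [|a b|f IHf g IHg|r f IHf|n f IHf|n f IHf] e /=.
- by rewrite normr1.
- by rewrite ger0_norm ?dist_ge0 ?dist_le1.
- by apply: le_trans (ler_normD _ _) _; apply: lerD.
- by rewrite normrM; apply: ler_wpM2l.
- set S := [set _ | _ in _].
  have hS : S !=set0 by exists (aeval (upd e n (szero M)) f); exists (szero M).
  have hub : ubound S (abnd f).
    by move=> y [m _ <-]; have := IHf (upd e n m); rewrite ler_norml => /andP[].
  rewrite ler_norml; apply/andP; split; last exact: ge_sup.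
  have Sx : S (aeval (upd e n (szero M)) f) by exists (szero M).
  apply: le_trans (le_sup_mem (ex_intro _ _ hub) Sx).
  by have := IHf (upd e n (szero M)); rewrite ler_norml => /andP[].
- set S := [set _ | _ in _].
  have hS : S !=set0 by exists (aeval (upd e n (szero M)) f); exists (szero M).
  have hlb : lbound S (- abnd f).
    by move=> y [m _ <-]; have := IHf (upd e n m); rewrite ler_norml => /andP[].
  rewrite ler_norml; apply/andP; split; first exact: lb_le_inf.
  have Sx : S (aeval (upd e n (szero M)) f) by exists (szero M).
  apply: le_trans (inf_le_mem (ex_intro _ _ hlb) Sx) _.
  by have := IHf (upd e n (szero M)); rewrite ler_norml => /andP[].
Qed.

Lemma ainf_le e n f m : aeval e (AInf n f) <= aeval (upd e n m) f.
Proof.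
apply: inf_le_mem; last by exists m.
exists (- abnd f) => y [m' _ <-].
by have := aeval_bnd (upd e n m') f; rewrite ler_norml => /andP[].
Qed.

Lemma ale_inf e n f x : (forall m, x <= aeval (upd e n m) f) -> x <= aeval e (AInf n f).
Proof.
move=> h; apply: lb_le_inf; first by exists (aeval (upd e n (szero M)) f); exists (szero M).
by move=> y [m _ <-].
Qed.

Lemma asup_ge e n f m : aeval (upd e n m) f <= aeval e (ASup n f).
Proof.
apply: le_sup_mem; last by exists m.
exists (abnd f) => y [m' _ <-].
by have := aeval_bnd (upd e n m') f; rewrite ler_norml => /andP[].
Qed.

Lemma age_sup e n f x : (forall m, aeval (upd e n m) f <= x) -> aeval e (ASup n f) <= x.
Proof.
move=> h; apply: ge_sup; first by exists (aeval (upd e n (szero M)) f); exists (szero M).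
by move=> y [m _ <-].
Qed.

Lemma foldr_inf_le l e0 e (g : aform R) :
  aeval e0 (foldr (@AInf R) g l) <= aeval (fun k => if k \in l then e k else e0 k) g.
Proof.
elim: l e0 => [|k l IH] e0 /=; first by [].
apply: le_trans (ainf_le _ _ _ (e k)) _.
apply: le_trans (IH _) _.
suff -> : (fun j => if j \in l then e j else upd e0 k (e k) j) =
          (fun j => if j \in k :: l then e j else e0 j) by [].
apply: funext => j; rewrite in_cons /upd; case: (j =P k) => [->|_] /=.
  by case: (k \in l).
by [].
Qed.

Lemma foldr_inf_ge0 l e0 (g : aform R) : (forall e, 0 <= aeval e g) ->
  0 <= aeval e0 (foldr (@AInf R) g l).
Proof.
move=> h; elim: l e0 => [|k l IH] e0 /=; first exact: h.
by apply: ale_inf => m; apply: IH.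
Qed.

End Generic.

Lemma tfree_max n t : tfree n t -> (n <= tmax t)%N.
Proof.
elim: t => [k|||a IHa b IHb|a IHa b IHb|a IHa b IHb|a IHa b IHb] //=;
  try (by move=> /eqP ->);
  by move=> /orP[/IHa|/IHb] h; rewrite leq_max h ?orbT.
Qed.

Lemma afree_max (R : Type) n (f : aform R) : afree n f -> (n <= amax f)%N.
Proof.
elim: f => [|a b|f IHf g IHg|r f IHf|k f IHf|k f IHf] //=.
- by move=> /orP[/tfree_max|/tfree_max] h; rewrite leq_max h ?orbT.
- by move=> /orP[/IHf|/IHg] h; rewrite leq_max h ?orbT.
- by move=> /andP[_ /IHf] h; rewrite leq_max h ?orbT.
- by move=> /andP[_ /IHf] h; rewrite leq_max h ?orbT.
Qed.

Lemma afree_foldr (R : Type) n l (g : aform R) :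
  afree n (foldr (@AInf R) g l) = (n \notin l) && afree n g.
Proof. by elim: l => [|k l IH] //=; rewrite IH in_cons negb_or andbA. Qed.

Definition aclose (R : Type) (g : aform R) := foldr (@AInf R) g (iota 0 (amax g).+1).

Lemma aclose_closed (R : Type) (g : aform R) : closed_aform (aclose g).
Proof.
move=> n; rewrite afree_foldr mem_iota /= add0n ltnS.
by apply/negP => /andP[/negP h /afree_max h']; apply: h.
Qed.

Lemma transfer (R : realType) (M : LStr R) (g : aform R) : models_AA M ->
  (forall N : LStr R, PA_model N -> forall e : nat -> N, 0 <= aeval e g) ->
  forall e : nat -> M, 0 <= aeval e g.
Proof.
move=> hM hN e.
have h := hM (aclose g) (aclose_closed g) (fun N HN => @foldr_inf_ge0 _ N _ _ _ (hN N HN)).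
apply: le_trans h _; apply: le_trans (foldr_inf_le _ _ e _) _.
rewrite (@aeval_agree _ _ _ e) // => k hk.
by rewrite mem_iota /= add0n ltnS hk.
Qed.


Section PA.
Variable R : realType.
Variable N : LStr R.
Hypothesis HN : PA_model N.
Local Notation env := (nat -> car N).
Local Notation "x ⊕ y" := (sadd x y) (at level 50, left associativity).
Local Notation "x ⊓ y" := (smeet x y) (at level 40, left associativity).
Local Notation "x ⊔ y" := (sjoin x y) (at level 40, left associativity).
Local Notation O := (szero N).
Local Notation I1 := (sone N).
Implicit Types (x y z w m : car N) (e : env).

Definition Def (P : env -> Prop) := exists f, forall e, psat e f <-> P e.

Lemma def_ext (P Q : env -> Prop) : (forall e, P e <-> Q e) -> Def P -> Def Q.
Proof. by move=> h [f hf]; exists f => e; rewrite hf h. Qed.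

Lemma def_eq s t : Def (fun e => pteval e s = pteval e t).
Proof. by exists (PEq s t). Qed.

Lemma def_const (P : Prop) : Def (fun _ => P).
Proof.
case: (pselect P) => hP.
  by exists (PImp PBot PBot) => e /=; split.
by exists PBot => e /=; split.
Qed.

Lemma def_imp P Q : Def P -> Def Q -> Def (fun e => P e -> Q e).
Proof. by move=> [f hf] [g hg]; exists (PImp f g) => e /=; rewrite hf hg. Qed.

Lemma def_not P : Def P -> Def (fun e => ~ P e).
Proof. by move=> [f hf]; exists (PImp f PBot) => e /=; rewrite hf. Qed.

Lemma def_and P Q : Def P -> Def Q -> Def (fun e => P e /\ Q e).
Proof.
move=> hP hQ; apply: def_ext (def_not (def_imp hP (def_not hQ))) => e.
split; last by move=> [a b] h; apply: (h a).
by move=> h; split; apply: contrapT => h'; apply: h.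
Qed.

Lemma def_or P Q : Def P -> Def Q -> Def (fun e => P e \/ Q e).
Proof.
move=> hP hQ; apply: def_ext (def_imp (def_not hP) hQ) => e.
split; last by case=> h h'; [exfalso; apply: h'|].
by move=> h; case: (pselect (P e)) => a; [left|right; apply: h].
Qed.

Lemma def_all n P : Def P -> Def (fun e => forall m, P (upd e n m)).
Proof. by move=> [f hf]; exists (PAll n f) => e /=; split => h m; apply/hf. Qed.

Lemma def_ex n P : Def P -> Def (fun e => exists m, P (upd e n m)).
Proof.
move=> hP; apply: def_ext (def_not (def_all n (def_not hP))) => e.
split; last by move=> [m hm] h; apply: (h m).
by move=> h; apply: contrapT => h'; apply: h => m hm; apply: h'; exists m.
Qed.

Lemma def_seq_or (T : eqType) (s : seq T) (Q : T -> env -> Prop) :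
  (forall a, Def (Q a)) -> Def (fun e => exists a, a \in s /\ Q a e).
Proof.
move=> hQ; elim: s => [|a s IH].
  by apply: def_ext (def_const False) => e; split => // [[a []]].
apply: def_ext (def_or (hQ a) IH) => e; split.
  by case=> [h|[b [hb h]]]; [exists a; rewrite mem_head|exists b; rewrite in_cons hb orbT].
by move=> [b]; rewrite in_cons => -[/orP[/eqP->|hb] h]; [left|right; exists b].
Qed.

Let HPA := let: And4 h _ _ _ := HN in h.
Lemma A1 x : x ⊕ I1 <> O. Proof. by case: HPA => h _; apply: h. Qed.
Lemma A2 x y : x ⊕ I1 = y ⊕ I1 -> x = y. Proof. by case: HPA => _ [h _]; apply: h. Qed.
Lemma add0 x : x ⊕ O = x. Proof. by case: HPA => _ [_ [h _]]; apply: h. Qed.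
Lemma addS x y : x ⊕ (y ⊕ I1) = (x ⊕ y) ⊕ I1.
Proof. by case: HPA => _ [_ [_ [h _]]]; apply: h. Qed.

Lemma def_ind P n e : Def P -> P (upd e n O) ->
  (forall m, P (upd e n m) -> P (upd e n (m ⊕ I1))) -> forall m, P (upd e n m).
Proof.
move=> [f hf] h0 hS m; apply/hf.
case: HPA => _ [_ [_ [_ [_ [_ hind]]]]].
apply: hind; first exact/hf.
by move=> m' /hf h; apply/hf; apply: hS.
Qed.

Ltac updsimp := rewrite /upd /=.

Lemma zero_add x : O ⊕ x = x.
Proof.
have := @def_ind (fun e : env => O ⊕ e 0%N = e 0%N) 0 (fun _ => O)
  (def_eq (PAdd PZero (PVar 0)) (PVar 0)); updsimp.
apply; first exact: add0.
by move=> m h; rewrite addS h.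
Qed.

Lemma succ_add x y : (x ⊕ I1) ⊕ y = (x ⊕ y) ⊕ I1.
Proof.
have := @def_ind (fun e : env => (e 1%N ⊕ I1) ⊕ e 0%N = (e 1%N ⊕ e 0%N) ⊕ I1) 0
  (fun _ => x) (def_eq (PAdd (PAdd (PVar 1) POne) (PVar 0)) (PAdd (PAdd (PVar 1) (PVar 0)) POne)).
updsimp; apply; first by rewrite !add0.
by move=> m h; rewrite !addS h.
Qed.

Lemma add_assoc x y z : x ⊕ (y ⊕ z) = (x ⊕ y) ⊕ z.
Proof.
have := @def_ind (fun e : env => e 1%N ⊕ (e 2%N ⊕ e 0%N) = (e 1%N ⊕ e 2%N) ⊕ e 0%N) 0
  (fun k => if k == 1%N then x else y)
  (def_eq (PAdd (PVar 1) (PAdd (PVar 2) (PVar 0))) (PAdd (PAdd (PVar 1) (PVar 2)) (PVar 0))).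
updsimp; apply; first by rewrite !add0.
by move=> m h; rewrite !addS h.
Qed.

Lemma zero_or_succ x : x = O \/ exists y, x = y ⊕ I1.
Proof.
have hd : Def (fun e : env => e 0%N = O \/ exists m, (upd e 1 m) 0%N = (upd e 1 m) 1%N ⊕ I1).
  apply: def_or; first exact: (def_eq (PVar 0) PZero).
  exact: (def_ex 1 (def_eq (PVar 0) (PAdd (PVar 1) POne))).
have := @def_ind _ 0%N (fun _ => O) hd; updsimp.
move=> h; have := h (or_introl erefl) (fun m _ => or_intror (ex_intro _ m erefl)) x.
by case=> [->|[m ->]]; [left|right; exists m].
Qed.

Lemma add_eq_self x w : x ⊕ w = x -> w = O.
Proof.
have := @def_ind (fun e : env => e 0%N ⊕ e 1%N = e 0%N -> e 1%N = O) 0 (fun _ => w)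
  (def_imp (def_eq (PAdd (PVar 0) (PVar 1)) (PVar 0)) (def_eq (PVar 1) PZero)).
updsimp; apply; first by rewrite zero_add.
by move=> m h; rewrite succ_add => /A2.
Qed.

Lemma add_eq0 a b : a ⊕ b = O -> b = O /\ a = O.
Proof.
case: (zero_or_succ b) => [->|[y ->]]; first by rewrite add0.
by rewrite addS => /A1.
Qed.

Definition ple (x y : N) := exists z, x ⊕ z = y.

Lemma ple_refl x : ple x x. Proof. by exists O; rewrite add0. Qed.
Lemma ple_trans x y z : ple x y -> ple y z -> ple x z.
Proof. by move=> [a <-] [b <-]; exists (a ⊕ b); rewrite add_assoc. Qed.
Lemma ple_anti x y : ple x y -> ple y x -> x = y.
Proof.
move=> [a ha] [b hb]; move: (hb); rewrite -{1}ha -add_assoc => /add_eq_self /add_eq0 [_ h0].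
by rewrite -ha h0 add0.
Qed.
Lemma ple_succ x : ple x (x ⊕ I1). Proof. by exists I1. Qed.
Lemma pnle_succ x : ~ ple (x ⊕ I1) x.
Proof.
move=> h; have /add_eq_self h1 := ple_anti h (ple_succ x).
by apply: (@A1 O); rewrite zero_add.
Qed.

Lemma pdef_le i j k : k <> i -> k <> j -> Def (fun e : env => ple (e i) (e j)).
Proof.
move=> ki kj; apply: def_ext (def_ex k (def_eq (PAdd (PVar i) (PVar k)) (PVar j))) => e /=.
have hi : (i == k) = false by apply/eqP => h; apply: ki.
have hj : (j == k) = false by apply/eqP => h; apply: kj.
by split=> -[m hm]; exists m; move: hm; rewrite /upd /= eqxx hi hj.
Qed.

Lemma ple_total x y : ple x y \/ ple y x.
Proof.
have hd : Def (fun e : env => ple (e 1%N) (e 0%N) \/ ple (e 0%N) (e 1%N)).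
  by apply: def_or; [apply: (@pdef_le 1%N 0%N 2%N)|apply: (@pdef_le 0%N 1%N 2%N)].
have := @def_ind _ 0%N (fun _ => x) hd; updsimp.
apply.
  by right; exists x; rewrite zero_add.
move=> m [h|[z hz]]; first by left; apply: ple_trans h (ple_succ m).
case: (zero_or_succ z) => [zO|[w zw]]; rewrite ?zw in hz.
  by left; exists I1; rewrite -hz zO add0.
by right; exists w; rewrite succ_add -addS.
Qed.

Let Hle := let: And4 _ _ h _ := HN in h.
Let Hnle := let: And4 _ _ _ h := HN in h.

Lemma pmeet_l x y : ple x y -> x ⊓ y = x. Proof. by move=> h; case: (Hle h). Qed.
Lemma pjoin_l x y : ple x y -> x ⊔ y = y. Proof. by move=> h; case: (Hle h). Qed.
Lemma pmeet_n x y : ~ ple x y -> x ⊓ y = y. Proof. by move=> h; case: (Hnle h). Qed.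
Lemma pjoin_n x y : ~ ple x y -> x ⊔ y = x. Proof. by move=> h; case: (Hnle h). Qed.
Lemma pmeet_r x y : ple y x -> x ⊓ y = y.
Proof.
move=> h; case: (pselect (ple x y)) => h'; last exact: pmeet_n.
by rewrite pmeet_l // (ple_anti h h').
Qed.
Lemma pjoin_r x y : ple y x -> x ⊔ y = x.
Proof.
move=> h; case: (pselect (ple x y)) => h'; last exact: pjoin_n.
by rewrite pjoin_l // (ple_anti h h').
Qed.
Lemma ple_meet_l x y : ple (x ⊓ y) x.
Proof. by case: (ple_total x y) => h; [rewrite pmeet_l|rewrite pmeet_r] => //; apply: ple_refl. Qed.
Lemma ple_meet_r x y : ple (x ⊓ y) y.
Proof. by case: (ple_total x y) => h; [rewrite pmeet_l|rewrite pmeet_r] => //; apply: ple_refl. Qed.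
Lemma pmeet_glb x y z : ple z x -> ple z y -> ple z (x ⊓ y).
Proof. by case: (ple_total x y) => h; [rewrite pmeet_l|rewrite pmeet_r]. Qed.
Lemma ple_join_l x y : ple x (x ⊔ y).
Proof. by case: (ple_total x y) => h; [rewrite pjoin_l|rewrite pjoin_r] => //; apply: ple_refl. Qed.
Lemma ple_join_r x y : ple y (x ⊔ y).
Proof. by case: (ple_total x y) => h; [rewrite pjoin_l|rewrite pjoin_r] => //; apply: ple_refl. Qed.

Lemma idI1 x : x ⊔ x = x. Proof. by rewrite pjoin_l //; apply: ple_refl. Qed.
Lemma idI2 z y : (z ⊔ y) ⊓ y = y. Proof. by rewrite pmeet_r //; apply: ple_join_r. Qed.
Lemma idI2' y w : (y ⊔ w) ⊓ y = y. Proof. by rewrite pmeet_r //; apply: ple_join_l. Qed.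
Lemma idI3 x y : y ⊔ (x ⊓ y) = y. Proof. by rewrite pjoin_r //; apply: ple_meet_r. Qed.
Lemma idI4 c b z : (c ⊓ b) ⊓ ((z ⊔ (c ⊓ b)) ⊓ b) = c ⊓ b.
Proof. by rewrite pmeet_l //; apply: pmeet_glb; [apply: ple_join_r|apply: ple_meet_r]. Qed.
Lemma idI5 z w b : ((z ⊔ w) ⊓ b) ⊓ b = (z ⊔ w) ⊓ b.
Proof. by rewrite pmeet_l //; apply: ple_meet_r. Qed.
Lemma idI6 x y z : (x ⊓ y) ⊓ z = x ⊓ (y ⊓ z).
Proof.
apply: ple_anti; apply: pmeet_glb.
- exact: ple_trans (ple_meet_l _ _) (ple_meet_l _ _).
- apply: pmeet_glb; [exact: ple_trans (ple_meet_l _ _) (ple_meet_r _ _)|exact: ple_meet_r].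
- apply: pmeet_glb; [exact: ple_meet_l|exact: ple_trans (ple_meet_r _ _) (ple_meet_l _ _)].
- exact: ple_trans (ple_meet_r _ _) (ple_meet_r _ _).
Qed.


Lemma def_op_add i1 i2 j : Def (fun e => e i1 ⊕ e i2 = e j).
Proof. exact: (def_eq (PAdd (PVar i1) (PVar i2)) (PVar j)). Qed.
Lemma def_op_mul i1 i2 j : Def (fun e => smul (e i1) (e i2) = e j).
Proof. exact: (def_eq (PMul (PVar i1) (PVar i2)) (PVar j)). Qed.

Definition fr3 (i1 i2 j : nat) := (maxn i1 (maxn i2 j)).+1.

Lemma pdef_le' i1 i2 (j : nat) : Def (fun e => ple (e i1) (e i2)) .
Proof.
apply: (@pdef_le i1 i2 (fr3 i1 i2 j)) => h;
  have := leqnn (fr3 i1 i2 j); rewrite {2}h /fr3 ltnNge !leq_max leqnn ?orbT //.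
Qed.

Lemma def_op_meet i1 i2 j : Def (fun e => e i1 ⊓ e i2 = e j).
Proof.
apply: def_ext (def_or (def_and (pdef_le' i1 i2 j) (def_eq (PVar i1) (PVar j)))
                       (def_and (def_not (pdef_le' i1 i2 j)) (def_eq (PVar i2) (PVar j)))) => e /=.
split; first by case=> -[h <-]; [rewrite pmeet_l|rewrite pmeet_n].
by case: (pselect (ple (e i1) (e i2))) => h <-; [left; rewrite pmeet_l|right; rewrite pmeet_n].
Qed.

Lemma def_op_join i1 i2 j : Def (fun e => e i1 ⊔ e i2 = e j).
Proof.
apply: def_ext (def_or (def_and (pdef_le' i1 i2 j) (def_eq (PVar i2) (PVar j)))
                       (def_and (def_not (pdef_le' i1 i2 j)) (def_eq (PVar i1) (PVar j)))) => e /=.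
split; first by case=> -[h <-]; [rewrite pjoin_l|rewrite pjoin_n].
by case: (pselect (ple (e i1) (e i2))) => h <-; [left; rewrite pjoin_l|right; rewrite pjoin_n].
Qed.

Lemma def_bin (op : N -> N -> N) a b j :
  (forall k, Def (fun e => teval e a = e k)) ->
  (forall k, Def (fun e => teval e b = e k)) ->
  (forall i1 i2 j, Def (fun e => op (e i1) (e i2) = e j)) ->
  Def (fun e => op (teval e a) (teval e b) = e j).
Proof.
move=> ha hb hop.
set k1 := (maxn (maxn (tmax a) (tmax b)) j).+1.
set k2 := k1.+1.
have Hd := def_ex k1 (def_ex k2 (def_and (ha k1) (def_and (hb k2) (hop k1 k2 j)))).
apply: def_ext Hd => e.
have ha1 : (tmax a < k1)%N by rewrite ltnS !leq_max leqnn.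
have hb1 : (tmax b < k1)%N by rewrite ltnS !leq_max leqnn !orbT.
have hj1 : (j < k1)%N by rewrite ltnS !leq_max leqnn !orbT.
have hk12 : (k1 < k2)%N by rewrite /k2.
have neq : forall p q : nat, (p < q)%N -> p <> q by move=> p q h e'; move: h; rewrite e' ltnn.
have k1a : forall k, (k <= tmax a)%N -> k <> k1 /\ k <> k2.
  move=> k hk; have h1 := leq_ltn_trans hk ha1; split; apply: neq => //.
  exact: ltn_trans h1 hk12.
have k1b : forall k, (k <= tmax b)%N -> k <> k1 /\ k <> k2.
  move=> k hk; have h1 := leq_ltn_trans hk hb1; split; apply: neq => //.
  exact: ltn_trans h1 hk12.
have jk : j <> k1 /\ j <> k2.
  by split; apply: neq => //; apply: ltn_trans hj1 hk12.
have k12 : k1 <> k2 by apply: neq.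
split.
- move=> [m1 [m2 [h1 [h2 h3]]]].
  move: h1 h2 h3; rewrite (@teval_agree _ _ _ e a) ?(@teval_agree _ _ _ e b).
  + rewrite /upd !eqxx /=.
    have -> : (k1 == k2) = false by apply/eqP.
    have -> : (j == k2) = false by apply/eqP; case: jk.
    have -> : (j == k1) = false by apply/eqP; case: jk.
    by move=> -> -> .
  + by move=> k hk; case: (k1b k hk) => n1 n2; rewrite !upd_other.
  + by move=> k hk; case: (k1a k hk) => n1 n2; rewrite !upd_other.
- move=> h; exists (teval e a), (teval e b).
  rewrite (@teval_agree _ _ _ e a) ?(@teval_agree _ _ _ e b).
  + rewrite /upd !eqxx /=.
    have -> : (k1 == k2) = false by apply/eqP.
    have -> : (j == k2) = false by apply/eqP; case: jk.
    by have -> : (j == k1) = false by apply/eqP; case: jk.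
  + by move=> k hk; case: (k1b k hk) => n1 n2; rewrite !upd_other.
  + by move=> k hk; case: (k1a k hk) => n1 n2; rewrite !upd_other.
Qed.

Lemma def_teval t : forall j, Def (fun e => teval e t = e j).
Proof.
elim: t => [n|||a IHa b IHb|a IHa b IHb|a IHa b IHb|a IHa b IHb] j /=.
- exact: (def_eq (PVar n) (PVar j)).
- exact: (def_eq PZero (PVar j)).
- exact: (def_eq POne (PVar j)).
- exact: def_bin IHa IHb def_op_add.
- exact: def_bin IHa IHb def_op_mul.
- exact: def_bin IHa IHb def_op_meet.
- exact: def_bin IHa IHb def_op_join.
Qed.

Lemma def_teq s t : Def (fun e => teval e s = teval e t).
Proof.
set k := (maxn (tmax s) (tmax t)).+1.
apply: def_ext (def_ex k (def_and (def_teval s k) (def_teval t k))) => e.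
have hs : forall m, teval (upd e k m) s = teval e s.
  move=> m; apply: teval_agree => i hi; rewrite upd_other // => h; move: hi.
  by rewrite h /k ltnNge leq_max leqnn.
have ht : forall m, teval (upd e k m) t = teval e t.
  move=> m; apply: teval_agree => i hi; rewrite upd_other // => h; move: hi.
  by rewrite h /k ltnNge leq_max leqnn orbT.
split; first by move=> [m []]; rewrite hs ht upd_same => -> ->.
by move=> h; exists (teval e s); rewrite hs ht upd_same.
Qed.

Fixpoint Vals (f : aform R) : seq R :=
  match f with
  | AOne => [:: 1]
  | ADist _ _ => [:: 0; 1]
  | AAdd f g => [seq p + q | p <- Vals f, q <- Vals g]
  | AScale r f => map ( *%R r) (Vals f)
  | ASup _ f | AInf _ f => Vals f
  end.

Let Hdisc := let: And4 _ h _ _ := HN in h.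

Lemma dist_cases x y : (x = y /\ dist x y = 0) \/ (x <> y /\ dist x y = 1).
Proof.
case: (pselect (x = y)) => h; first by left; split => //; rewrite h dist_refl.
by right; split => //; apply: Hdisc.
Qed.

Lemma aeval_in_Vals e (f : aform R) : aeval e f \in Vals f.
Proof.
elim: f e => [|a b|f IHf g IHg|r f IHf|n f IHf|n f IHf] e /=.
- by rewrite mem_seq1.
- by case: (dist_cases (teval e a) (teval e b)) => -[_ ->]; rewrite !inE eqxx ?orbT.
- exact: allpairs_f.
- exact: map_f.
- have hS : [set aeval (upd e n m) f | m in [set: N]] !=set0.
    by exists (aeval (upd e n O) f); exists O.
  have hV : forall r, [set aeval (upd e n m) f | m in [set: N]] r -> r \in Vals f.
    by move=> r [m _ <-]; apply: IHf.
  have := finite_sup_mem hS hV.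
  by move=> [m _ <-]; apply: IHf.
- have hS : [set aeval (upd e n m) f | m in [set: N]] !=set0.
    by exists (aeval (upd e n O) f); exists O.
  have hV : forall r, [set aeval (upd e n m) f | m in [set: N]] r -> r \in Vals f.
    by move=> r [m _ <-]; apply: IHf.
  have := finite_inf_mem hS hV.
  by move=> [m _ <-]; apply: IHf.
Qed.

Lemma def_aeval (f : aform R) : forall v, Def (fun e => aeval e f = v).
Proof.
elim: f => [|a b|f IHf g IHg|r f IHf|n f IHf|n f IHf] v /=.
- exact: def_const.
- apply: def_ext (def_or (def_and (def_teq a b) (def_const (v = 0)))
                        (def_and (def_not (def_teq a b)) (def_const (v = 1)))) => e.
  case: (dist_cases (teval e a) (teval e b)) => -[h ->]; split.
  + by case=> -[h1 h2].
  + by move=> <-; left.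
  + by case=> -[h1 h2].
  + by move=> <-; right.
- have H : Def (fun e => exists p, p \in Vals f /\ exists q, q \in Vals g /\
      (p + q = v /\ (aeval e f = p /\ aeval e g = q))).
    apply: def_seq_or => p; apply: def_seq_or => q.
    by apply: def_and; [apply: def_const|apply: def_and].
  apply: def_ext H => e.
  split; first by move=> [x [_ [y [_ [<- [-> ->]]]]]].
  move=> <-; exists (aeval e f); split; first exact: aeval_in_Vals.
  by exists (aeval e g); split; first exact: aeval_in_Vals.
- have H : Def (fun e => exists p, p \in Vals f /\ (r * p = v /\ aeval e f = p)).
    by apply: def_seq_or => p; apply: def_and; [apply: def_const|].
  apply: def_ext H => e.
  split; first by move=> [x [_ [<- ->]]].
  by move=> <-; exists (aeval e f); split; first exact: aeval_in_Vals.
- have H : Def (fun e => (exists m, aeval (upd e n m) f = v) /\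
      (forall m, exists p, p \in Vals f /\ (p <= v /\ aeval (upd e n m) f = p))).
    apply: def_and; first exact: (def_ex n (IHf v)).
    apply: (def_all n (P := fun e => exists p, p \in Vals f /\ (p <= v /\ aeval e f = p))).
    by apply: def_seq_or => p; apply: def_and; [apply: def_const|].
  apply: def_ext H => e.
  set S := [set _ | _ in _].
  have hS : S !=set0 by exists (aeval (upd e n O) f); exists O.
  have hV : forall r, S r -> r \in Vals f by move=> r [m _ <-]; apply: aeval_in_Vals.
  have hub : has_ubound S.
    exists (abnd f) => y [m _ <-].
    by have := aeval_bnd (upd e n m) f; rewrite ler_norml => /andP[].
  split.
  + move=> [[m hm] hall]; apply: sup_eq_max; first by exists m.
    by move=> y [m' _ <-]; have [x [_ [hx ->]]] := hall m'.
  + move=> hv; split.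
      by have [m _ hm] := finite_sup_mem hS hV; exists m; rewrite hm.
    move=> m; exists (aeval (upd e n m) f); split; first exact: aeval_in_Vals.
    by split => //; rewrite -hv; apply: le_sup_mem => //; exists m.
- have H : Def (fun e => (exists m, aeval (upd e n m) f = v) /\
      (forall m, exists p, p \in Vals f /\ (v <= p /\ aeval (upd e n m) f = p))).
    apply: def_and; first exact: (def_ex n (IHf v)).
    apply: (def_all n (P := fun e => exists p, p \in Vals f /\ (v <= p /\ aeval e f = p))).
    by apply: def_seq_or => p; apply: def_and; [apply: def_const|].
  apply: def_ext H => e.
  set S := [set _ | _ in _].
  have hS : S !=set0 by exists (aeval (upd e n O) f); exists O.
  have hV : forall r, S r -> r \in Vals f by move=> r [m _ <-]; apply: aeval_in_Vals.
  have hlb : has_lbound S.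
    exists (- abnd f) => y [m _ <-].
    by have := aeval_bnd (upd e n m) f; rewrite ler_norml => /andP[].
  split.
  + move=> [[m hm] hall]; apply: inf_eq_min; first by exists m.
    by move=> y [m' _ <-]; have [x [_ [hx ->]]] := hall m'.
  + move=> hv; split.
      by have [m _ hm] := finite_inf_mem hS hV; exists m; rewrite hm.
    move=> m; exists (aeval (upd e n m) f); split; first exact: aeval_in_Vals.
    by split => //; rewrite -hv; apply: inf_le_mem => //; exists m.
Qed.
End PA.


Lemma teval_agree' (R : realType) (M : LStr R) (e e' : nat -> M) t :
  (forall k, tfree k t -> e k = e' k) -> teval e t = teval e' t.
Proof.
elim: t => [n|||a IHa b IHb|a IHa b IHb|a IHa b IHb|a IHa b IHb] //= h;
  try (by apply: h; rewrite /= eqxx);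
  by rewrite IHa ?IHb // => k hk; apply: h; rewrite /= hk ?orbT.
Qed.

Section Rho.
Variable R : realType.
Variable phi : aform R.
Variable Kc : R.

Definition vZ := S (amax phi).
Definition vC := S (S (amax phi)).
Definition vU := S (S (S (amax phi))).
Definition vB := S (S (S (S (amax phi)))).
Definition vK := S (S (S (S (S (amax phi))))).

Definition body (t : term) : aform R :=
  AAdd phi (AScale Kc (ADist (TVar 0) (TMeet (TJoin (TVar vZ) t) (TVar vB)))).
Definition Rho (t : term) : aform R := AInf vZ (AInf 0 (body t)).

Definition goodt (t : term) := forall k, tfree k t -> k <> 0%N /\ k <> vZ.

Section AnyM.
Variable M : LStr R.
Implicit Types (e : nat -> M).

Lemma phi_agree e k m x : (amax phi < k)%N ->
  aeval (upd (upd e k m) 0 x) phi = aeval (upd e 0 x) phi.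
Proof.
move=> hk; apply: aeval_agree => j hj; rewrite /upd; case: (j =P 0%N) => // _.
by case: (j =P k) => // ejk; move: hk; rewrite -ejk ltnNge hj.
Qed.

Lemma body_eval e t z x : goodt t ->
  aeval (upd (upd e vZ z) 0 x) (body t) =
  aeval (upd e 0 x) phi + Kc * dist x (smeet (sjoin z (teval e t)) (e vB)).
Proof.
move=> ht; rewrite /= phi_agree //.
rewrite (@teval_agree' _ _ _ e t); last first.
  move=> k /ht [k0 kZ]; rewrite /upd; case: (k =P 0%N) => // _; by case: (k =P vZ).
rewrite /upd /= eqxx; have -> : (vB == vZ) = false by rewrite /vB /vZ; apply/eqP; lia.
by [].
Qed.

Lemma rho_le e t z : goodt t ->
  aeval e (Rho t) <= aeval (upd e 0 (smeet (sjoin z (teval e t)) (e vB))) phi.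
Proof.
move=> ht; apply: le_trans (ainf_le _ _ _ z) _.
apply: le_trans (ainf_le _ _ _ (smeet (sjoin z (teval e t)) (e vB))) _.
by rewrite body_eval // dist_refl mulr0 addr0.
Qed.

Lemma rho_ge e t L : goodt t ->
  (forall z x, L <= aeval (upd e 0 x) phi + Kc * dist x (smeet (sjoin z (teval e t)) (e vB))) ->
  L <= aeval e (Rho t).
Proof.
move=> ht h; apply: ale_inf => z; apply: ale_inf => x; by rewrite body_eval.
Qed.
End AnyM.

Section InN.
Variable N : LStr R.
Hypothesis HN : PA_model N.
Hypothesis HK : 2 * abnd phi < Kc.

Lemma rho_eqN (e : nat -> N) t : goodt t ->
  aeval e (Rho t) = inf [set aeval (upd e 0 (smeet (sjoin z (teval e t)) (e vB))) phi | z in [set: N]].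
Proof.
move=> ht; change (inf [set aeval (upd e vZ z') (AInf 0 (body t)) | z' in [set: N]] = inf [set aeval (upd e 0 (smeet (sjoin z (teval e t)) (e vB))) phi | z in [set: N]]).
congr inf; congr image; apply: funext => z.
change (inf [set aeval (upd (upd e vZ z) 0 x) (body t) | x in [set: N]] = aeval (upd e 0 (smeet (sjoin z (teval e t)) (e vB))) phi).
apply: inf_eq_min.
  by exists (smeet (sjoin z (teval e t)) (e vB)) => //; rewrite body_eval // dist_refl mulr0 addr0.
move=> y [x _ <-]; rewrite body_eval //.
case: (dist_cases HN x (smeet (sjoin z (teval e t)) (e vB))) => -[hx ->].
  by rewrite mulr0 addr0 hx.
rewrite mulr1.
have h1 := aeval_bnd (upd e 0 (smeet (sjoin z (teval e t)) (e vB))) phi.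
have h2 := aeval_bnd (upd e 0 x) phi.
move: h1 h2; rewrite !ler_norml => /andP[_ h1] /andP[h2 _].
set a := aeval _ phi in h1 *; set c := aeval _ phi in h2 *; have HK2 := HK. set B := abnd phi in h1 h2 HK2 *. lra.
Qed.
End InN.
End Rho.


Section Main.
Variable R : realType.
Variable phi : aform R.
Variable kappa : R.
Definition Kc := 2 * abnd phi + 1.

Definition t1 := TMeet (TVar (vC phi)) (TVar (vB phi)).
Definition t2 := TAdd t1 TOne.
Definition tU := TVar (vU phi).
Definition tB := TVar (vB phi).
Definition tK := TAdd (TVar (vU phi)) (TVar (vK phi)).

Definition Xf := AInf (vC phi) (AAdd (Rho phi Kc t1) (AScale (-1) (Rho phi Kc t2))).
Definition Gf := AScale (-1) (AAdd Xf (AScale kappa (AAdd (Rho phi Kc tB) (AScale (-1) (Rho phi Kc tU))))).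

Lemma good_t1 : goodt phi t1.
Proof. by move=> k /= /orP[] /eqP <-; rewrite /vC /vB /vZ; split; lia. Qed.
Lemma good_t2 : goodt phi t2.
Proof. by move=> k /= /orP[/orP[]|//] /eqP <-; rewrite /vC /vB /vZ; split; lia. Qed.
Lemma good_tU : goodt phi tU.
Proof. by move=> k /= /eqP <-; rewrite /vU /vZ; split; lia. Qed.
Lemma good_tB : goodt phi tB.
Proof. by move=> k /= /eqP <-; rewrite /vB /vZ; split; lia. Qed.
Lemma good_tK : goodt phi tK.
Proof. by move=> k /= /orP[] /eqP <-; rewrite /vU /vK /vZ; split; lia. Qed.

Lemma Kc_big : 2 * abnd phi < Kc.
Proof. by rewrite /Kc ltrDl. Qed.

Section InN.
Variable N : LStr R.
Hypothesis HN : PA_model N.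
Variable g0 : R.
Hypothesis hg0 : 0 < g0.
Hypothesis hgap : forall p q, p \in Vals phi -> q \in Vals phi -> p != q -> g0 <= `|p - q|.
Hypothesis hkappa : kappa = g0 / (2 * abnd phi + 1).

Variable e : nat -> N.
Local Notation b := (e (vB phi)).
Local Notation u := (e (vU phi)).
Local Notation "x ⊕ y" := (sadd x y) (at level 50, left associativity).
Local Notation "x ⊓ y" := (smeet x y) (at level 40, left associativity).
Local Notation "x ⊔ y" := (sjoin x y) (at level 40, left associativity).

Definition FN (x : N) := aeval (upd e 0 x) phi.
Definition rho (y : N) := inf [set FN ((z ⊔ y) ⊓ b) | z in [set: N]].

Lemma rho_env (e' : nat -> N) t : goodt phi t ->
  (forall k, (k <= amax phi)%N -> e' k = e k) -> e' (vB phi) = b ->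
  aeval e' (Rho phi Kc t) = rho (teval e' t).
Proof.
move=> ht hag hb; rewrite (rho_eqN HN Kc_big) // hb /rho; congr inf; congr image.
apply: funext => z; rewrite /FN; apply: aeval_agree => k hk.
by rewrite /upd; case: (k =P 0%N) => // _; apply: hag.
Qed.

Lemma rho_props y : rho y \in Vals phi /\ `|rho y| <= abnd phi.
Proof.
have hS : [set FN ((z ⊔ y) ⊓ b) | z in [set: N]] !=set0 by exists (FN ((y ⊔ y) ⊓ b)); exists y.
have hV : forall r, [set FN ((z ⊔ y) ⊓ b) | z in [set: N]] r -> r \in Vals phi.
  move=> r [z _ <-]; rewrite /FN. have := aeval_in_Vals HN (upd e 0 ((z ⊔ y) ⊓ b)) phi. exact.
have [z _ hz] := finite_inf_mem hS hV.
rewrite /rho -hz /FN; split; [exact: (aeval_in_Vals HN (upd e 0 ((z ⊔ y) ⊓ b)) phi)|exact: aeval_bnd].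
Qed.

Lemma rho_lb y : has_lbound [set FN ((z ⊔ y) ⊓ b) | z in [set: N]].
Proof.
exists (- abnd phi) => r [z _ <-].
by have := aeval_bnd (upd e 0 ((z ⊔ y) ⊓ b)) phi; rewrite ler_norml => /andP[].
Qed.

Lemma rho_mono y y' : ple y y' -> rho y <= rho y'.
Proof.
move=> hy; apply: lb_le_inf; first by exists (FN ((y' ⊔ y') ⊓ b)); exists y'.
move=> r [z _ <-]; apply: inf_le_mem; first exact: rho_lb.
exists (z ⊔ y') => //; rewrite (pjoin_r HN) //. have := ple_trans HN hy (ple_join_r HN z y'). exact.
Qed.

Lemma rho_const y : (forall z, (z ⊔ y) ⊓ b = b) -> rho y = FN b.
Proof.
move=> h; apply: inf_eq_min; first by exists y => //; rewrite h.
by move=> r [z _ <-]; rewrite h.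
Qed.

Lemma rho_b : rho b = FN b.
Proof. by apply: rho_const => z; rewrite (idI2 HN). Qed.

Lemma rho_nle y : ~ ple y b -> rho y = FN b.
Proof.
move=> h; apply: rho_const => z; apply: (pmeet_n HN) => h'; apply: h.
exact: (ple_trans HN) (ple_join_r HN _ _) h'.
Qed.

Lemma main_N : 0 <= aeval e Gf.
Proof.
have eX : forall c, aeval e Xf <= rho (c ⊓ b) - rho ((c ⊓ b) ⊕ sone N).
  move=> c; apply: le_trans (ainf_le _ _ _ c) _.
  change (aeval (upd e (vC phi) c) (Rho phi Kc t1) + (-1) * aeval (upd e (vC phi) c) (Rho phi Kc t2)
     <= rho (c ⊓ b) - rho ((c ⊓ b) ⊕ sone N)).
  have hBC : (vB phi == vC phi) = false by apply/eqP; rewrite /vB /vC; lia.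
  have hag : forall k, (k <= amax phi)%N -> upd e (vC phi) c k = e k.
    move=> k hk; rewrite /upd (_ : (k == vC phi) = false) //; apply/eqP; rewrite /vC; lia.
  have hbb : upd e (vC phi) c (vB phi) = b by rewrite /upd hBC.
  rewrite (rho_env good_t1 hag hbb) (rho_env good_t2 hag hbb) /= /upd eqxx hBC mulN1r.
  by [].
have eB : aeval e (Rho phi Kc tB) = rho b by rewrite (rho_env good_tB).
have eU : aeval e (Rho phi Kc tU) = rho u by rewrite (rho_env good_tU).
have hB := abnd_ge0 phi.
have hk0 : 0 <= kappa by rewrite hkappa; apply: divr_ge0; [exact: ltW|lra].
suff : aeval e Xf + kappa * (rho b - rho u) <= 0.
  have -> : aeval e Gf = (-1) * (aeval e Xf + kappa * (aeval e (Rho phi Kc tB) + (-1) * aeval e (Rho phi Kc tU))) by [].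
  rewrite eB eU; lra.
case: (lerP (rho b) (rho u)) => hbu.
  have hX : aeval e Xf <= 0.
    have := eX b; rewrite (pmeet_l HN (ple_refl HN b)) rho_b (rho_nle (@pnle_succ _ _ HN b)) subrr; exact.
  have hk : kappa * (rho b - rho u) <= 0 by apply: mulr_ge0_le0 => //; rewrite subr_le0.
  by have := lerD hX hk; rewrite addr0.
have hub : ple u b.
  by apply: contrapT => h; move: hbu; rewrite rho_nle // rho_b ltxx.
have [c [hc hne]] : exists c, ple (c ⊕ sone N) b /\ rho c <> rho (c ⊕ sone N).
  apply: contrapT => hno.
  have hall : forall c, ple (c ⊕ sone N) b -> rho c = rho (c ⊕ sone N).
    by move=> c hc; apply: contrapT => h; apply: hno; exists c.
  pose P := fun e' : nat -> N => ple (e' (vU phi) ⊕ e' (vK phi)) (e' (vB phi)) ->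
                                 aeval e' (Rho phi Kc tK) = rho u.
  have hKU : (vU phi == vK phi) = false by apply/eqP; rewrite /vU /vK; lia.
  have hKB : (vB phi == vK phi) = false by apply/eqP; rewrite /vB /vK; lia.
  have hPk : forall k, P (upd e (vK phi) k) <-> (ple (u ⊕ k) b -> rho (u ⊕ k) = rho u).
    move=> k; rewrite /P (rho_env good_tK).
    - by rewrite /= /upd eqxx hKU hKB.
    - move=> j hj; rewrite /upd (_ : (j == vK phi) = false) //; apply/eqP; rewrite /vK; lia.
    - by rewrite /upd hKB.
  have hDP : Def P.
    apply: def_imp; last exact: (def_aeval HN).
    set w := S (vK phi).
    apply: def_ext (def_ex w (def_eq N (PAdd (PAdd (PVar (vU phi)) (PVar (vK phi))) (PVar w))
                                     (PVar (vB phi)))) => e'.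
    have h1 : (vU phi == w) = false by apply/eqP; rewrite /w /vU /vK; lia.
    have h2 : (vK phi == w) = false by apply/eqP; rewrite /w /vK; lia.
    have h3 : (vB phi == w) = false by apply/eqP; rewrite /w /vB /vK; lia.
    by split=> -[m hm]; exists m; move: hm; rewrite /upd /= eqxx h1 h2 h3.
  have hind := def_ind HN hDP.
  have hk : forall k, P (upd e (vK phi) k).
    apply: hind.
      by apply/hPk; rewrite (add0 HN).
    move=> k /hPk IH; apply/hPk => hle.
    rewrite (addS HN) in hle *.
    have hle' : ple (u ⊕ k) b by apply: (ple_trans HN) (ple_succ _) hle.
    by rewrite -(hall _ hle) IH.
  have [k hk'] := hub.
  have := (hk k); rewrite hPk hk' => /(_ (ple_refl HN _)) hbu'.
  by move: hbu; rewrite hbu' ltxx.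
have hcb : ple c b by apply: (ple_trans HN) (ple_succ _) hc.
have := eX c; rewrite (pmeet_l HN) // => hX.
have hmono := rho_mono (ple_succ c).
have [hv1 _] := rho_props c; have [hv2 _] := rho_props (c ⊕ sone N).
have hg : g0 <= rho (c ⊕ sone N) - rho c.
  have := hgap hv2 hv1 (introN eqP (nesym hne)).
  by rewrite ger0_norm // subr_ge0.
have [_ hb1] := rho_props b; have [_ hu1] := rho_props u.
have hd : rho b - rho u <= 2 * abnd phi.
  by move: hb1 hu1; rewrite !ler_norml => /andP[_ ?] /andP[? _]; lra.
have hkappa2 := hkappa.
set B := abnd phi in hB hd hkappa2.
have h1 : kappa * (rho b - rho u) <= kappa * (2 * B) by apply: ler_wpM2l.
have h2 : kappa * (2 * B) <= g0.
  have hpos : 0 < 2 * B + 1 by lra.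
  rewrite hkappa2 mulrAC ler_pdivrMr //.
  apply: ler_wpM2l; [exact: ltW|lra].
have hX' : aeval e Xf <= - g0 by apply: le_trans hX _; lra.
have := le_trans h1 h2; move: hX'; set X := aeval e Xf; set Y := kappa * _; lra.
Qed.
End InN.
End Main.


Lemma gap_exists (R : realType) (V : seq R) : exists g0 : R, 0 < g0 /\
  forall p q, p \in V -> q \in V -> p != q -> g0 <= `|p - q|.
Proof.
pose S := [set r : R | r = 1 \/ exists p q, [/\ p \in V, q \in V, p != q & r = `|p - q|]].
have hS : S !=set0 by exists 1; left.
have hV : forall r, S r -> r \in 1 :: [seq `|p - q| | p <- V, q <- V].
  move=> r [->|[p [q [hp hq _ ->]]]]; first exact: mem_head.
  by rewrite in_cons; apply/orP; right; apply: allpairs_f.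
have [m [Sm hm]] := finite_min hS hV.
exists m; split.
  case: Sm => [->|[p [q [_ _ hpq ->]]]]; first exact: ltr01.
  by rewrite normr_gt0 subr_eq0.
move=> p q hp hq hpq; apply: hm; right; by exists p, q.
Qed.

Definition env3 (M : Type) (x y z : M) : nat -> M :=
  fun k => if k == 0%N then x else if k == 1%N then y else z.

Section MSide.
Variable R : realType.
Variable M : LStr R.
Hypothesis hAA : models_AA M.

Lemma transfer_id s t : (forall N : LStr R, PA_model N -> forall e : nat -> N, teval e s = teval e t) ->
  forall e : nat -> M, teval e s = teval e t.
Proof.
move=> hN e.
have := @transfer R M (AScale (-1) (ADist s t)) hAA.
have hN' : forall N : LStr R, PA_model N -> forall e : nat -> N, 0 <= aeval e (AScale (-1) (ADist s t)).
  by move=> N HN e'; rewrite /= (hN N HN e') dist_refl mulr0.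
move=> /(_ hN' e) /=; rewrite mulN1r oppr_ge0 => h.
apply: dist_sep; apply/le_anti; rewrite h dist_ge0 //.
Qed.

Local Notation "x ⊕ y" := (sadd x y) (at level 50, left associativity).
Local Notation "x ⊓ y" := (smeet x y) (at level 40, left associativity).
Local Notation "x ⊔ y" := (sjoin x y) (at level 40, left associativity).

Lemma J0 (x : M) : x ⊓ x = x.
Proof.
exact: (transfer_id (s := TMeet (TVar 0) (TVar 0)) (t := TVar 0)
  (fun N HN e => pmeet_l HN (ple_refl HN _)) (env3 x x x)).
Qed.
Lemma J2 (z y : M) : (z ⊔ y) ⊓ y = y.
Proof.
exact: (transfer_id (s := TMeet (TJoin (TVar 0) (TVar 1)) (TVar 1)) (t := TVar 1)
  (fun N HN e => idI2 HN _ _) (env3 z y y)).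
Qed.
Lemma J2' (y w : M) : (y ⊔ w) ⊓ y = y.
Proof.
exact: (transfer_id (s := TMeet (TJoin (TVar 0) (TVar 1)) (TVar 0)) (t := TVar 0)
  (fun N HN e => idI2' HN _ _) (env3 y w w)).
Qed.
Lemma J1 (x : M) : x ⊔ x = x.
Proof.
exact: (transfer_id (s := TJoin (TVar 0) (TVar 0)) (t := TVar 0)
  (fun N HN e => idI1 HN _) (env3 x x x)).
Qed.
Lemma J3 (x y : M) : y ⊔ (x ⊓ y) = y.
Proof.
exact: (transfer_id (s := TJoin (TVar 1) (TMeet (TVar 0) (TVar 1))) (t := TVar 1)
  (fun N HN e => idI3 HN _ _) (env3 x y y)).
Qed.
Lemma J4 (c b z : M) : (c ⊓ b) ⊓ ((z ⊔ (c ⊓ b)) ⊓ b) = c ⊓ b.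
Proof.
exact: (transfer_id (s := TMeet (TMeet (TVar 0) (TVar 1)) (TMeet (TJoin (TVar 2) (TMeet (TVar 0) (TVar 1))) (TVar 1)))
  (t := TMeet (TVar 0) (TVar 1)) (fun N HN e => idI4 HN _ _ _) (env3 c b z)).
Qed.
Lemma J5 (z w b : M) : ((z ⊔ w) ⊓ b) ⊓ b = (z ⊔ w) ⊓ b.
Proof.
exact: (transfer_id (s := TMeet (TMeet (TJoin (TVar 0) (TVar 1)) (TVar 2)) (TVar 2))
  (t := TMeet (TJoin (TVar 0) (TVar 1)) (TVar 2)) (fun N HN e => idI5 HN _ _ _) (env3 z w b)).
Qed.
Lemma J6 (x y z : M) : (x ⊓ y) ⊓ z = x ⊓ (y ⊓ z).
Proof.
exact: (transfer_id (s := TMeet (TMeet (TVar 0) (TVar 1)) (TVar 2))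
  (t := TMeet (TVar 0) (TMeet (TVar 1) (TVar 2))) (fun N HN e => idI6 HN _ _ _) (env3 x y z)).
Qed.

Lemma sle_trans (x y z : M) : sle x y -> sle y z -> sle x z.
Proof. by rewrite /sle => hxy hyz; rewrite -{1}hxy J6 hyz hxy. Qed.

End MSide.


Local Notation "x ⊓ y" := (smeet x y) (at level 40, left associativity).
Local Notation "x ⊔ y" := (sjoin x y) (at level 40, left associativity).

Section DistSet.
Variable R : realType.
Variable M : LStr R.
Variable D : set M.
Hypothesis hD : D !=set0.

Lemma ds_lb x : has_lbound [set dist x y | y in D].
Proof. by exists 0 => r [y _ <-]; apply: dist_ge0. Qed.

Lemma ds_ge0 x : 0 <= dist_set x D.
Proof.
case: hD => y Dy; apply: lb_le_inf; first by exists (dist x y); exists y.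
by move=> r [y' _ <-]; apply: dist_ge0.
Qed.

Lemma ds_mem y : D y -> dist_set y D = 0.
Proof.
move=> Dy; apply: inf_eq_min; first by exists y => //; rewrite dist_refl.
by move=> r [y' _ <-]; apply: dist_ge0.
Qed.

Lemma ds_lip x p : dist_set p D <= dist x p + dist_set x D.
Proof.
rewrite addrC -lerBlDr; apply: lb_le_inf.
  by case: hD => y Dy; exists (dist x y); exists y.
move=> r [y Dy <-]; rewrite lerBlDr.
apply: le_trans (inf_le_mem (ds_lb p) (ex_intro2 _ _ y Dy erefl)) _.
by apply: le_trans (dist_tri p x y) _; rewrite dist_sym addrC.
Qed.
End DistSet.

Theorem mainTheorem7 (R : realType) (M : LStr R) (D I : set M) :
  models_AA M ->
  formula_definable D ->
  proper_cut I ->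
  (forall x y, I x -> ~ I y -> slt x y) ->
  (forall a, I a -> exists u, [/\ I u, D u & sle a u]) ->
  forall (eps : R), 0 < eps ->
  forall b : M, ~ I b ->
  exists v, [/\ ~ I v, eps_nbhd D eps v & sle v b].
Proof.
move=> hAA [hDcl [phi [e0 hphi]]] [[[a Ia] Idown Isucc] Iprop] hlt hcof eps heps b Ib.
apply: contrapT => hno.
have H : forall v, ~ I v -> sle v b -> eps <= dist_set v D.
  move=> v hv hvb; rewrite leNgt; apply/negP => hlt'; apply: hno; exists v; split => //.
have [u [Iu Du _]] := hcof a Ia.
have Dne : D !=set0 by exists u.
pose F := fun x => dist_set x D.
have [g0 [hg0 hgap]] := gap_exists (Vals phi).
pose kappa := g0 / (2 * abnd phi + 1).
have hB := abnd_ge0 phi.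
have hkap : 0 < kappa by rewrite /kappa divr_gt0 //; set B := abnd phi in hB *; lra.
pose S0 := [set F v | v in [set v | ~ I v /\ sle v b]].
have S0ne : S0 !=set0 by exists (F b); exists b => //; split => //; exact: (J0 hAA).
have S0lb : lbound S0 eps by move=> r [v [hv hvb] <-]; apply: H.
pose s := inf S0.
have hs : eps <= s by apply: lb_le_inf.
pose eta := kappa * eps / 4.
have heta : 0 < eta by rewrite /eta divr_gt0 // mulr_gt0.
have [fb' [b' [Ib' hb'b] hfb'] hb'] := inf_adherent heta (conj S0ne (ex_intro _ eps S0lb)).
rewrite -/s -hfb' in hb'.
have hub' : sle u b' by case: (hlt u b' Iu Ib').
pose eM := fun k => if k == vU phi then u else if k == vB phi then b' else e0 k.
have hG := transfer hAA (fun N HN e => main_N HN hg0 hgap erefl e) eM.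
have eF : forall (e' : nat -> M) x, (forall k, (k <= amax phi)%N -> e' k = e0 k) ->
    aeval (upd e' 0 x) phi = F x.
  move=> e' x hag; rewrite /F -hphi; apply: aeval_agree => k hk.
  by rewrite /upd; case: (k =P 0%N) => // _; apply: hag.
have hagM : forall k, (k <= amax phi)%N -> eM k = e0 k.
  move=> k hk.
  have h1 : (k < vU phi)%N by rewrite /vU !ltnS (leq_trans hk) // !leqW.
  have h2 : (k < vB phi)%N by rewrite /vB !ltnS (leq_trans hk) // !leqW.
  move: h1 h2; rewrite /eM !ltn_neqAle => /andP[/negbTE -> _] /andP[/negbTE -> _] //.
have eMU : eM (vU phi) = u by rewrite /eM eqxx.
have eMB : eM (vB phi) = b'.
  have h : (vB phi == vU phi) = false by apply: gtn_eqF; exact: ltnSn.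
  by rewrite /eM h eqxx.
have hKc : 1 <= Kc phi by rewrite /Kc lerDr; apply: mulr_ge0.
have lowF : forall x p, F p <= F x + Kc phi * dist x p.
  move=> x p; apply: le_trans (ds_lip Dne x p) _; rewrite addrC lerD2l.
  by rewrite -{1}(mul1r (dist x p)) ler_wpM2r // dist_ge0.
have hU : aeval eM (Rho phi (Kc phi) (tU phi)) <= 0.
  apply: le_trans (rho_le _ _ u (@good_tU _ phi)) _.
  rewrite eF // /= eMU eMB (J1 hAA) hub'; by rewrite /F (ds_mem Du).
have hBv : s <= aeval eM (Rho phi (Kc phi) (tB phi)).
  apply: (@rho_ge _ phi (Kc phi) M eM (tB phi) s (@good_tB _ phi)) => z x; rewrite eF // /= eMB (J2 hAA).
  apply: le_trans (lowF x b'); apply: inf_le_mem; first by exists eps.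
  by exists b'.
pose X := aeval eM (Xf phi).
have hX : X <= - kappa * s.
  move: hG; rewrite /Gf.
  change (0 <= (-1) * (X + kappa * (aeval eM (Rho phi (Kc phi) (tB phi)) + (-1) * aeval eM (Rho phi (Kc phi) (tU phi))))
    -> X <= - kappa * s).
  move=> hG.
  have : kappa * s <= kappa * (aeval eM (Rho phi (Kc phi) (tB phi)) + (-1) * aeval eM (Rho phi (Kc phi) (tU phi))).
    by apply: ler_wpM2l; [exact: ltW|lra].
  lra.
have [c hc] : exists c, aeval (upd eM (vC phi) c)
    (AAdd (Rho phi (Kc phi) (t1 phi)) (AScale (-1) (Rho phi (Kc phi) (t2 phi)))) < X + eta.
  apply: contrapT => hnc.
  have : X + eta <= X.
    apply: ale_inf => c; rewrite leNgt; apply/negP => h; apply: hnc; by exists c.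
  lra.
move: hc; set eC := upd eM (vC phi) c.
change (aeval eC (Rho phi (Kc phi) (t1 phi)) + (-1) * aeval eC (Rho phi (Kc phi) (t2 phi)) < X + eta -> False).
have hCB : (vB phi == vC phi) = false by apply: gtn_eqF; rewrite /vB /vC ltnS leqnSn.
have eCB : eC (vB phi) = b' by rewrite /eC /upd hCB.
have eCC : eC (vC phi) = c by rewrite /eC /upd eqxx.
have hagC : forall k, (k <= amax phi)%N -> eC k = e0 k.
  move=> k hk; have h : (k == vC phi) = false.
    by apply: ltn_eqF; rewrite /vC ltnS (leq_trans hk) // leqW.
  by rewrite /eC /upd h; apply: hagM.
have et1 : teval eC (t1 phi) = c ⊓ b' by rewrite /= eCC eCB.
have et2 : teval eC (t2 phi) = sadd (c ⊓ b') (sone M) by rewrite /= eCC eCB.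
set c' := c ⊓ b' in et1 et2.
have hsp : 0 < kappa * eps by apply: mulr_gt0.
have hks : kappa * eps <= kappa * s by apply: ler_wpM2l; [exact: ltW|].
have hX2 : X <= - (kappa * s) by rewrite -mulNr.
case: (pselect (I c')) => Ic'.
- have Ic1 := Isucc _ Ic'.
  have [u2 [Iu2 Du2 hcu2]] := hcof _ Ic1.
  have hu2b : sle u2 b' by case: (hlt u2 b' Iu2 Ib').
  have h2 : aeval eC (Rho phi (Kc phi) (t2 phi)) <= 0.
    apply: le_trans (rho_le _ _ u2 (@good_t2 _ phi)) _.
    have hj : u2 ⊔ sadd c' (sone M) = u2 by rewrite -{2}((J3 hAA) (sadd c' (sone M)) u2) hcu2.
    by rewrite eF // et2 eCB hj hu2b /F (ds_mem Du2).
  have h1 : 0 <= aeval eC (Rho phi (Kc phi) (t1 phi)).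
    apply: (@rho_ge _ phi (Kc phi) M eC (t1 phi) _ (@good_t1 _ phi)) => z x; apply: addr_ge0; first by rewrite eF //; apply: ds_ge0.
    apply: mulr_ge0; [lra|exact: dist_ge0].
  move=> hlt2.
  have : X + eta < 0.
    rewrite /eta; move: hX2 hks hsp; set A := kappa * eps; set Bq := kappa * s; lra.
  lra.
- have h1 : s <= aeval eC (Rho phi (Kc phi) (t1 phi)).
    apply: (@rho_ge _ phi (Kc phi) M eC (t1 phi) _ (@good_t1 _ phi)) => z x; rewrite eF // et1 eCB.
    set p := (z ⊔ c') ⊓ b'.
    apply: le_trans (lowF x p); apply: inf_le_mem; first by exists eps.
    exists p => //; split.
      move=> Ip; apply: Ic'; apply: Idown Ip; rewrite /sle /p /c'; exact: (J4 hAA).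
    apply: (sle_trans hAA) hb'b; rewrite /sle /p; exact: (J5 hAA).
  have h2 : aeval eC (Rho phi (Kc phi) (t2 phi)) < s + eta.
    apply: le_lt_trans (rho_le _ _ b' (@good_t2 _ phi)) _.
    by rewrite eF // et2 eCB (J2' hAA).
  move=> hlt2.
  move: hlt2 h1 h2 hX2 hks hsp; rewrite /eta; set A := kappa * eps; set Bq := kappa * s; lra.
Qed.
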